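(* Let $S_2^{in}>S_2^m$, $S_1^{in}>\lambda_1^1(D,r)$, and $0<D\le\min\bigl(rm_1,(1-r)\mu_2(S_2^m)\bigr)$ (so that $\phi_j(D)$ is defined). Then $\phi_1(D)>0$. In addition, if $D>D_2^*:=(1-r)\mu_2(S_2^{in})$, then $\phi_2(D)>0$.
   Context: Let $k_1,k_2>0$, $r\in(0,1)$, $r_1=r$, $r_2=1-r$, $D_i=D/r_i$. $\mu_1\in C^1(\mathbb R_+)$ with $\mu_1(0)=0$, $\mu_1(+\infty)=m_1$, $\mu_1'>0$ on $(0,\infty)$; $\mu_2\in C^1(\mathbb R_+)$ with $\mu_2(0)=0$, $\mu_2(+\infty)=0$, and there is $S_2^m>0$ with $\mu_2'>0$ on $(0,S_2^m)$, $\mu_2'<0$ on $(S_2^m,\infty)$. $\lambda_1^1(D,r)$ is the unique solution of $\mu_1(S)=D_1$; $\lambda_2^{21}(D,r)\le\lambda_2^{22}(D,r)$ are the solutions of $\mu_2(S)=D_2$ (for $D\le r_2\mu_2(S_2^m)$). Let $X_1^{1*}=(S_1^{in}-\lambda_1^1)/k_1$ and let $X_1^{2*}=X_1^{2*}(D,r,S_1^{in})$ be the unique solution in $(X_1^{1*},S_1^{in}/k_1)$ of $\mu_1(S_1^{in}-k_1x)=D_2(x-X_1^{1*})/x$. Define $\phi_j(D)=S_2^{in}+k_2X_1^{2*}-\lambda_2^{2j}(D,r)$, $j=1,2$. *)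

(* Defs.v *)
From Stdlib Require Import Reals Lra.
From Coquelicot Require Import Coquelicot.
Open Scope R_scope.

Definition C1_Rplus (f : R -> R) : Prop :=
  (forall x, 0 <= x -> filterlim f (at_right x) (locally (f x))) /\
  (forall x, 0 < x -> ex_derive f x /\ continuous (Derive f) x) /\
  (exists d0, filterlim (Derive f) (at_right 0) (locally d0)).

Definition mu1_hyp (mu1 : R -> R) (m1 : R) : Prop :=
  C1_Rplus mu1 /\ mu1 0 = 0 /\ is_lim mu1 p_infty m1 /\
  (forall x, 0 < x -> Derive mu1 x > 0).

Definition mu2_hyp (mu2 : R -> R) (S2m : R) : Prop :=
  0 < S2m /\ C1_Rplus mu2 /\ mu2 0 = 0 /\ is_lim mu2 p_infty 0 /\
  (forall x, 0 < x < S2m -> Derive mu2 x > 0) /\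
  (forall x, S2m < x -> Derive mu2 x < 0).

(* Break-even concentrations, D_i = D / r_i with r_1 = r, r_2 = 1 - r. *)
Definition is_lambda11 (mu1 : R -> R) (D r lam : R) : Prop :=
  0 <= lam /\ mu1 lam = D / r.

Definition is_lambda2 (mu2 : R -> R) (D r lam21 lam22 : R) : Prop :=
  0 <= lam21 <= lam22 /\
  (forall S, 0 <= S -> (mu2 S = D / (1 - r) <-> (S = lam21 \/ S = lam22))).

Definition X11 (k1 S1in lam : R) : R := (S1in - lam) / k1.

Definition is_X12 (mu1 : R -> R) (k1 D r S1in lam x : R) : Prop :=
  X11 k1 S1in lam < x < S1in / k1 /\
  mu1 (S1in - k1 * x) = (D / (1 - r)) * (x - X11 k1 S1in lam) / x.

Definition phi (S2in k2 x lam2j : R) : R := S2in + k2 * x - lam2j.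

(* Main.v *)
Require Import Defs.
From Stdlib Require Import Reals Lra.
From Coquelicot Require Import Coquelicot.
Open Scope R_scope.

Lemma dec_mu2 (mu2 : R -> R) (S2m a b : R) :
  (forall x, 0 < x -> ex_derive mu2 x) ->
  (forall x, S2m < x -> Derive mu2 x < 0) -> 0 < S2m ->
  S2m < a -> a < b -> mu2 b < mu2 a.
Proof.
  intros Hd Hneg H0 Ha Hab.
  destruct (MVT_cor2 mu2 (Derive mu2) a b Hab) as [c [Hc Hc2]].
  - intros c Hc. apply is_derive_Reals. apply Derive_correct. apply Hd. lra.
  - assert (Derive mu2 c < 0) by (apply Hneg; lra).
    assert (Derive mu2 c * (b - a) < 0).
    { apply Rmult_neg_pos; lra. }
    lra.
Qed.

Lemma exists_low_sol (mu2 : R -> R) (S2m c : R) :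
  (forall x, 0 < x -> ex_derive mu2 x) ->
  filterlim mu2 (at_right 0) (locally (mu2 0)) -> mu2 0 = 0 ->
  0 < S2m -> 0 < c -> c <= mu2 S2m ->
  exists S, 0 <= S <= S2m /\ mu2 S = c.
Proof.
  intros Hd Hl H0 HS Hc Hle.
  destruct (Req_dec c (mu2 S2m)) as [E|NE].
  { exists S2m; split; [lra|auto]. }
  rewrite H0 in Hl.
  apply filterlim_locally with (eps := mkposreal c Hc) in Hl.
  destruct Hl as [delta Hdelta].
  set (e := Rmin (delta/2) (S2m/2)).
  assert (He1 : 0 < e) by (unfold e; apply Rmin_glb_lt; destruct delta; simpl; lra).
  assert (He2 : e <= delta/2) by apply Rmin_l.
  assert (He3 : e <= S2m/2) by apply Rmin_r.
  assert (Hme : mu2 e < c).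
  { assert (Hb : ball 0 (mkposreal c Hc) (mu2 e)).
    { apply Hdelta; auto.
      change (Rabs (e - 0) < delta). rewrite Rminus_0_r, Rabs_pos_eq by lra.
      destruct delta; simpl in *; lra. }
    change (Rabs (mu2 e - 0) < c) in Hb.
    rewrite Rminus_0_r in Hb. apply Rabs_def2 in Hb. lra. }
  destruct (Ranalysis5.IVT_interv (fun x => mu2 x - c) e S2m) as [z [Hz Hz2]].
  - intros a Ha. apply continuity_pt_minus.
    + apply continuity_pt_filterlim. apply (ex_derive_continuous (K:=R_AbsRing) (V:=R_NormedModule)). apply Hd. lra.
    + apply continuity_pt_const. intros u v; reflexivity.
  - lra.
  - simpl. lra.
  - simpl. lra.
  - exists z. split; lra.
Qed.

Theorem lemmaA4
  (k1 k2 r m1 S2m : R) (mu1 mu2 : R -> R)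
  (D S1in S2in lam1 lam21 lam22 x2 : R) :
  0 < k1 -> 0 < k2 -> 0 < r < 1 ->
  mu1_hyp mu1 m1 -> mu2_hyp mu2 S2m ->
  0 < D -> D <= Rmin (r * m1) ((1 - r) * mu2 S2m) ->
  is_lambda11 mu1 D r lam1 ->
  is_lambda2 mu2 D r lam21 lam22 ->
  S2in > S2m -> S1in > lam1 ->
  is_X12 mu1 k1 D r S1in lam1 x2 ->
  phi S2in k2 x2 lam21 > 0 /\
  (D > (1 - r) * mu2 S2in -> phi S2in k2 x2 lam22 > 0).
Proof.
  intros Hk1 Hk2 Hr _ [HS2m [[Hc [Hd _]] [H20 [_ [_ Hneg]]]]] HD HDle _
    [[Hl0 Hl12] Hsol] HS2 HS1 [[Hx1 _] _].
  assert (Hd' : forall x, 0 < x -> ex_derive mu2 x) by (intros x Hx; apply Hd, Hx).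
  assert (HX : 0 < X11 k1 S1in lam1).
  { unfold X11. apply Rdiv_lt_0_compat; lra. }
  assert (Hkx : 0 < k2 * x2) by (apply Rmult_lt_0_compat; lra).
  assert (Hcpos : 0 < D / (1 - r)) by (apply Rdiv_lt_0_compat; lra).
  assert (Hcle : D / (1 - r) <= mu2 S2m).
  { assert (D <= (1 - r) * mu2 S2m) by (eapply Rle_trans; [exact HDle| apply Rmin_r]).
    apply Rmult_le_reg_l with (1 - r); [lra|].
    field_simplify; lra. }
  split.
  - destruct (exists_low_sol mu2 S2m (D / (1 - r)) Hd' (Hc 0 (Rle_refl 0)) H20 HS2m Hcpos Hcle)
      as [S [HS HSe]].
    assert (HS' : S = lam21 \/ S = lam22) by (apply Hsol; lra).
    unfold phi. destruct HS'; subst; lra.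
  - intros HDgt. unfold phi.
    assert (Hlt : mu2 S2in < D / (1 - r)).
    { apply Rmult_lt_reg_l with (1 - r); [lra|]. field_simplify; lra. }
    assert (lam22 < S2in).
    { destruct (Rlt_le_dec lam22 S2in) as [h|h]; auto.
      assert (Hm : mu2 lam22 = D / (1 - r)) by (apply Hsol; lra).
      destruct (Req_dec lam22 S2in) as [E|NE].
      - subst. lra.
      - assert (mu2 lam22 < mu2 S2in) by (apply (dec_mu2 mu2 S2m); auto; lra).
        lra. }
    lra.
Qed.
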